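(* Let $A$ be a Hopf algebra and $R$ a unital algebra. Then a linear map $\cdot:A\otimes R\to R$ makes $R$ a partial $A$-module algebra in the Hopf-algebraic sense (conditions (H1)--(H3) below) if and only if there is a linear map $\mathfrak e:A\to R=M(R)$ such that $(R,\cdot,\mathfrak e)$ is a partial $A$-module algebra in the multiplier sense (conditions (i)--(iv) below); in that case $\mathfrak e(a)=a\cdot 1_R$. (H1) $1_A\cdot x=x$; (H2) $a\cdot(xy)=(a_{(1)}\cdot x)(a_{(2)}\cdot y)$; (H3) $a\cdot(b\cdot x)=(a_{(1)}\cdot 1_R)(a_{(2)}b\cdot x)$, for all $a,b\in A$, $x,y\in R$.
   Context: A partial $A$-module algebra in the multiplier sense is a triple $(R,\cdot,\mathfrak e)$, with $\cdot:A\otimes R\to R$ and $\mathfrak e:A\to M(R)$ linear, such that for all $a,b\in A$, $x,y\in R$: (i) $a\cdot(x(b\cdot y))=(a_{(1)}\cdot x)(a_{(2)}b\cdot y)$; (ii) $\mathfrak e(a)(b\cdot x)=a_{(1)}\cdot(S(a_{(2)})b\cdot x)$ and $\mathfrak e(A)R\subseteq A\cdot R$ (the linear span of the $a\cdot x$); (iii) given $a_1,\dots,a_n\in A$ and $x_1,\dots,x_m\in R$ there exists $b\in A$ with $a_ib=a_i=ba_i$ and $a_i\cdot x_j=a_i\cdot(b\cdot x_j)$ for all $i,j$; (iv) $A\cdot x=0$ implies $x=0$. Here $S$ is the antipode of $A$ and Sweedler notation is used. *)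

(* Defs.v *)
From HB Require Import structures.
From mathcomp Require Import all_boot all_order all_algebra.
Set Implicit Arguments. Unset Strict Implicit. Unset Printing Implicit Defensive.
Import GRing.Theory.
Local Open Scope ring_scope.

Definition klinear (K : fieldType) (U V : lmodType K) (f : U -> V) : Prop :=
  forall (k : K) (u v : U), f (k *: u + v) = k *: f u + f v.

Definition kfunctional (K : fieldType) (U : lmodType K) (f : U -> K) : Prop :=
  forall (k : K) (u v : U), f (k *: u + v) = k * f u + f v.

Definition kbilinear (K : fieldType) (U1 U2 V : lmodType K)
  (f : U1 -> U2 -> V) : Prop :=
  (forall u1, klinear (f u1)) /\ (forall u2, klinear (fun u1 => f u1 u2)).

Definition ktrilinear (K : fieldType) (U1 U2 U3 V : lmodType K)
  (f : U1 -> U2 -> U3 -> V) : Prop :=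
  (forall u1 u2, klinear (f u1 u2)) /\
  (forall u1 u3, klinear (fun u2 => f u1 u2 u3)) /\
  (forall u2 u3, klinear (fun u1 => f u1 u2 u3)).

(* Tensors in A (x) A are represented by finite lists of simple tensors
   s = [:: (u_1,v_1); ...] standing for sum_i u_i (x) v_i.  A coproduct is
   given by a map delta : A -> seq (A * A) choosing a representative of
   Delta(a) = sum a_(1) (x) a_(2) (Sweedler notation).  All axioms are stated
   through the universal property of the tensor product, i.e. after applying
   an arbitrary (bi/tri)linear map into an arbitrary K-vector space; hence
   they only depend on the tensor represented, not on the representative. *)
Record isHopfAlgebra (K : fieldType) (A : algType K)
    (delta : A -> seq (A * A)) (eps : A -> K) (S : A -> A) : Prop := {
  hopf_delta_lin : forall (V : lmodType K) (f : A -> A -> V), kbilinear f ->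
    forall (k : K) (a b : A),
      \sum_(p <- delta (k *: a + b)) f p.1 p.2 =
      k *: (\sum_(p <- delta a) f p.1 p.2) + \sum_(p <- delta b) f p.1 p.2;
  hopf_coassoc : forall (V : lmodType K) (g : A -> A -> A -> V), ktrilinear g ->
    forall a : A,
      \sum_(p <- delta a) \sum_(q <- delta p.1) g q.1 q.2 p.2 =
      \sum_(p <- delta a) \sum_(q <- delta p.2) g p.1 q.1 q.2;
  hopf_eps_lin : kfunctional eps;
  hopf_counitl : forall a : A, \sum_(p <- delta a) eps p.1 *: p.2 = a;
  hopf_counitr : forall a : A, \sum_(p <- delta a) eps p.2 *: p.1 = a;
  hopf_delta_mul : forall (V : lmodType K) (f : A -> A -> V), kbilinear f ->
    forall a b : A,
      \sum_(p <- delta (a * b)) f p.1 p.2 =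
      \sum_(p <- delta a) \sum_(q <- delta b) f (p.1 * q.1) (p.2 * q.2);
  hopf_delta_one : forall (V : lmodType K) (f : A -> A -> V), kbilinear f ->
      \sum_(p <- delta 1) f p.1 p.2 = f 1 1;
  hopf_eps_mul : forall a b : A, eps (a * b) = eps a * eps b;
  hopf_eps_one : eps 1 = 1;
  hopf_S_lin : klinear S;
  hopf_antipodel : forall a : A, \sum_(p <- delta a) S p.1 * p.2 = eps a *: 1;
  hopf_antipoder : forall a : A, \sum_(p <- delta a) p.1 * S p.2 = eps a *: 1
}.

Definition partial_mod_alg_hopf (K : fieldType) (A : algType K)
    (delta : A -> seq (A * A)) (R : algType K) (act : A -> R -> R) : Prop :=
  (forall x : R, act 1 x = x) /\
  (forall (a : A) (x y : R),
      act a (x * y) = \sum_(p <- delta a) act p.1 x * act p.2 y) /\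
  (forall (a b : A) (x : R),
      act a (act b x) = \sum_(p <- delta a) act p.1 1 * act (p.2 * b) x).

(* Partial A-module algebra in the multiplier sense, (i)-(iv), for a unital
   algebra R, where the multiplier algebra M(R) is identified with R. *)
Definition partial_mod_alg_mult (K : fieldType) (A : algType K)
    (delta : A -> seq (A * A)) (S : A -> A) (R : algType K)
    (act : A -> R -> R) (e : A -> R) : Prop :=
  (forall (a b : A) (x y : R),
      act a (x * act b y) = \sum_(p <- delta a) act p.1 x * act (p.2 * b) y) /\
  (forall (a b : A) (x : R),
      e a * act b x = \sum_(p <- delta a) act p.1 (act (S p.2 * b) x)) /\
  (forall (a : A) (x : R), exists s : seq (K * (A * R)),
      e a * x = \sum_(q <- s) q.1 *: act q.2.1 q.2.2) /\
  (forall (as_ : seq A) (xs : seq R), exists b : A,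
      forall a, a \in as_ ->
        [/\ a * b = a, b * a = a & forall x, x \in xs -> act a x = act a (act b x)]) /\
  (forall x : R, (forall a : A, act a x = 0) -> x = 0).

(* Main.v *)
Require Import Defs.
From HB Require Import structures.
From mathcomp Require Import all_boot all_order all_algebra.
Local Open Scope ring_scope.
Import GRing.Theory.

Section Helpers.
Variables (K : fieldType) (U V : lmodType K) (f : U -> V) (h : klinear f).

Lemma klin0 : f 0 = 0.
Proof.
have H := h 1 0 0; rewrite !scale1r !addr0 in H.
by apply: (addrI (f 0)); rewrite -H addr0.
Qed.

Lemma klinD u v : f (u + v) = f u + f v.
Proof. by have := h 1 u v; rewrite !scale1r. Qed.

Lemma klinZ k u : f (k *: u) = k *: f u.
Proof. by have := h k u 0; rewrite !addr0 klin0 addr0. Qed.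

Lemma klinB u v : f (u - v) = f u - f v.
Proof. by rewrite -scaleN1r addrC h scaleN1r addrC. Qed.

Lemma klin_sum (I : Type) (s : seq I) (F : I -> U) :
  f (\sum_(i <- s) F i) = \sum_(i <- s) f (F i).
Proof. exact: (big_morph f klinD klin0). Qed.
End Helpers.
Arguments klin0 {K U V f}.
Arguments klinD {K U V f}.
Arguments klinZ {K U V f}.
Arguments klinB {K U V f}.
Arguments klin_sum {K U V f} h {I}.

Section Main.
Variables (K : fieldType) (A : algType K)
    (delta : A -> seq (A * A)) (eps : A -> K) (S : A -> A)
    (hA : isHopfAlgebra delta eps S)
    (R : algType K) (act : A -> R -> R) (hact : kbilinear act).

Let actl x : klinear (fun u => act u x) := hact.2 x.
Let actr a : klinear (act a) := hact.1 a.

Lemma keyL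
  (H3 : forall a c x, act a (act c x) = \sum_(p <- delta a) act p.1 1 * act (p.2 * c) x)
  a b x :
  \sum_(p <- delta a) act p.1 (act (S p.2 * b) x) = act a 1 * act b x.
Proof.
under eq_bigr => p _ do rewrite H3.
pose g := fun u v w => act u 1 * act (v * (S w * b)) x.
have tg : ktrilinear g.
  split; [|split].
  - move=> u v k w w'; rewrite /g (hopf_S_lin hA) mulrDl mulrDr -scalerAl -scalerAr.
    by rewrite (actl x) mulrDr scalerAr.
  - move=> u w k v v'; rewrite /g mulrDl -scalerAl.
    by rewrite (actl x) mulrDr scalerAr.
  - move=> v w k u u'; rewrite /g (actl 1) mulrDl scalerAl.
    done.
have := hopf_coassoc hA tg a; rewrite /g => ->.
transitivity (\sum_(p <- delta a) (eps p.2 *: act p.1 1) * act b x).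
  apply: eq_bigr => p _; rewrite -mulr_sumr -scalerAl scalerAr; congr (_ * _).
  rewrite -(klin_sum (actl x)).
  under eq_bigr => q _ do rewrite mulrA.
  by rewrite -mulr_suml (hopf_antipoder hA) -scalerAl mul1r (klinZ (actl x)).
rewrite -mulr_suml; congr (_ * _).
rewrite -{2}(hopf_counitr hA a) (klin_sum (actl 1)); apply: eq_bigr => p _.
by rewrite (klinZ (actl 1)).
Qed.

Lemma mult_to_hopf e : partial_mod_alg_mult delta S act e -> partial_mod_alg_hopf delta act.
Proof.
move=> [hi [hii [hii2 [hiii hiv]]]].
have H3 : forall a c y, act a (act c y) =
    \sum_(p <- delta a) act p.1 1 * act (p.2 * c) y.
  by move=> a c y; rewrite -hi mul1r.
have H1 : forall y, act 1 y = y.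
  move=> y; apply/eqP; rewrite -subr_eq0; apply/eqP; apply: hiv => a.
  rewrite (klinB (actr a)); apply/eqP; rewrite subr_eq0; apply/eqP.
  have [b hb] := hiii (a :: map snd (delta a)) [:: y].
  have [_ _ hb3] := hb a (mem_head _ _).
  rewrite [RHS](hb3 y (mem_head _ _)) !H3.
  apply: eq_big_seq => p hp.
  have [hb1 _ _] := hb p.2 (mem_behead (s:=a :: _) (map_f snd hp)).
  by rewrite hb1 mulr1.
split; first exact: H1.
split; last exact: H3.
by move=> a x y; rewrite -{1}(H1 y) hi; apply: eq_bigr => p _; rewrite mulr1.
Qed.

Lemma hopf_to_mult : partial_mod_alg_hopf delta act ->
  partial_mod_alg_mult delta S act (fun a => act a 1).
Proof.
move=> [H1 [H2 H3]].
split.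
  move=> a b x y; rewrite H2.
  under eq_bigr => p _ do rewrite H3 mulr_sumr.
  pose g := fun u v w => act u x * (act v 1 * act (w * b) y).
  have tg : ktrilinear g.
    split; [|split].
    - move=> u v k w w'; rewrite /g mulrDl -scalerAl.
      by rewrite (actl y) mulrDr scalerAr mulrDr scalerAr.
    - move=> u w k v v'; rewrite /g (actl 1) mulrDl -scalerAl mulrDr -scalerAr.
      done.
    - move=> v w k u u'; rewrite /g (actl x) mulrDl -scalerAl.
      done.
  have := hopf_coassoc hA tg a; rewrite /g => <-.
  apply: eq_bigr => p _.
  under eq_bigr => q _ do rewrite mulrA.
  by rewrite -mulr_suml -H2 mulr1.
split; first by move=> a b x; rewrite keyL.
split.
  move=> a x; exists [seq (1, (p.1, act (S p.2) x)) | p <- delta a].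
  rewrite -{1}(H1 x) -keyL // big_map; apply: eq_bigr => p _.
  by rewrite scale1r mulr1.
split.
  by move=> as_ xs; exists 1 => a _; split; rewrite ?mulr1 ?mul1r // => x _; rewrite H1.
by move=> x hx; rewrite -(H1 x) hx.
Qed.

End Main.

Theorem mainTheorem9 (K : fieldType) (A : algType K)
    (delta : A -> seq (A * A)) (eps : A -> K) (S : A -> A)
    (hA : isHopfAlgebra delta eps S)
    (R : algType K) (act : A -> R -> R) (hact : kbilinear act) :
  (partial_mod_alg_hopf delta act <->
     exists e : A -> R, klinear e /\ partial_mod_alg_mult delta S act e) /\
  (forall e : A -> R, klinear e -> partial_mod_alg_mult delta S act e ->
     forall a : A, e a = act a 1).
Proof.
split.
  split.
    move=> H; exists (fun a => act a 1); split; first exact: hact.2.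
    exact: (@hopf_to_mult K A delta eps S hA R act hact H).
  by move=> [e [_ he]]; exact: (@mult_to_hopf K A delta S R act hact e he).
move=> e _ he a.
have [H1 [_ H3]] := @mult_to_hopf K A delta S R act hact e he.
have [_ [hii _]] := he.
have := hii a 1 1; rewrite H1 mulr1 => ->.
by rewrite (@keyL K A delta eps S hA R act hact H3) H1 mulr1.
Qed.
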